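(* Let $\mathcal{G}$ be a nonatomic aggregative game as in the context satisfying Assumptions (N1), (N2), (N3), with cost functions of the form $f_\theta(\bm{x}_\theta,\bm{X})=\langle\bm{x}_\theta,\mathbf{c}(\bm{X})\rangle-u_\theta(\bm{x}_\theta)$, where $\mathbf{c}$ is a monotone map on $\mathcal{M}$ (i.e. $\langle\mathbf{c}(\bm{X})-\mathbf{c}(\bm{Y}),\bm{X}-\bm{Y}\rangle\ge0$) and each $u_\theta$ is concave on $\mathcal{M}$. Then: (1) $\mathcal{G}$ is monotone; (2) if $u_\theta$ is strictly concave on $\mathcal{M}$ for every $\theta$, then $\mathcal{G}$ is strictly monotone; (3) if $\mathbf{c}$ is strictly monotone on $\mathcal{M}$, then $\mathcal{G}$ is aggregatively strictly monotone; (4) if each $u_\theta$ is strongly concave on $\mathcal{M}$ with modulus $\alpha_\theta$ and $\inf_\theta\alpha_\theta=\alpha>0$, then $\mathcal{G}$ is strongly monotone with modulus $\alpha$; (5) if $\mathbf{c}$ is strongly monotone on $\mathcal{M}$ with modulus $\beta$, then $\mathcal{G}$ is aggregatively strongly monotone with modulus $\beta$.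
   Context: Nonatomic game: $T\ge1$, $\Theta=[0,1]$ with Lebesgue measure; player $\theta$ has pure-action set $\mathcal{X}_\theta\subset\mathbb{R}^T$ and cost $f_\theta(\bm{x}_\theta,\bm{X})$, $\bm{X}$ the aggregate. $\mathcal{X}=\{\bm{x}\in L^2([0,1],\mathbb{R}^T):\bm{x}_\theta\in\mathcal{X}_\theta\text{ a.e.}\}$, $\int\bm{x}=(\int_0^1x_{\theta,t}d\theta)_t$, $\mathcal{S}=\{\int\bm{x}:\bm{x}\in\mathcal{X}\}$. Fix $M>0$, $\mathcal{M}=[0,M+1]^T$, $\mathcal{M}'$ a neighbourhood of $\mathcal{M}$. (N1) $\theta\mapsto\mathcal{X}_\theta$ has nonempty convex compact values, Borel graph, and $\mathcal{X}_\theta$ in the closed ball of radius $M$ about $0$. (N2) $f_\theta$ defined on $\mathcal{M}'^2$, bounded on $\mathcal{M}^2$; for each $\bm{Y}\in\mathcal{M}$: $(\theta,\bm{x})\mapsto f_\theta(\bm{x},\bm{Y})$ measurable on the graph of $\mathcal{X}$; $f_\theta(\cdot,\bm{Y})$ continuous and convex on $\mathcal{M}'$; subgradients in $\partial_1f_\theta(\bm{x},\bm{Y})$ (subdifferential in the first variable), $\bm{x},\bm{Y}\in\mathcal{M}$, are bounded in norm by a constant $B_f$. (N3) With $Br(\bm{Y})=\{\bm{x}\in\mathcal{X}:\bm{x}_\theta\in\arg\min_{\mathcal{X}_\theta}f_\theta(\cdot,\bm{Y})\,\forall\theta\}$ and $\mathcal{D}(\bm{x},\bm{Y})(\theta)=\{\mathbf{g}\in\partial_1f_\theta(\bm{x}_\theta,\bm{Y}):\langle\mathbf{g},\bm{y}-\bm{x}_\theta\rangle\ge0\,\forall\bm{y}\in\mathcal{X}_\theta\}$,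 for all $\bm{Y}\in\mathcal{S}$ and $\bm{x}\in Br(\bm{Y})$ the correspondence $\theta\mapsto\mathcal{D}(\bm{x},\bm{Y})(\theta)$ is measurable. $H(\bm{x})=\{\mathbf{g}\in L^2([0,1],\mathbb{R}^T):\mathbf{g}_\theta\in\partial_1f_\theta(\bm{x}_\theta,\int\bm{x})\text{ a.e.}\}$. For all $\bm{x},\bm{y}\in L^2([0,1],\mathcal{M})$, $\mathbf{g}\in H(\bm{x})$, $\mathbf{h}\in H(\bm{y})$, let $I=\int_\Theta\langle\mathbf{g}_\theta-\mathbf{h}_\theta,\bm{x}_\theta-\bm{y}_\theta\rangle d\theta$. The game is monotone if always $I\ge0$; strictly monotone if moreover $I=0$ only when $\bm{x}=\bm{y}$ a.e.; aggregatively strictly monotone if moreover $I=0$ only when $\int\bm{x}=\int\bm{y}$; strongly monotone with modulus $\alpha$ if $I\ge\alpha\|\bm{x}-\bm{y}\|_2^2$; aggregatively strongly monotone with modulus $\beta$ if $I\ge\beta\|\int\bm{x}-\int\bm{y}\|^2$. *)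

(* Defs.v *)
From HB Require Import structures.
From mathcomp Require Import all_boot all_order all_algebra.
From mathcomp Require Import all_classical all_reals all_analysis.
Set Implicit Arguments. Unset Strict Implicit. Unset Printing Implicit Defensive.
Import Order.TTheory GRing.Theory Num.Theory numFieldNormedType.Exports.
Local Open Scope classical_set_scope.
Local Open Scope ring_scope.

Section NonatomicGame.
Context {R : realType} {T : nat}.
Local Notation vec := 'rV[R]_T.

Definition dotv (a b : vec) : R := \sum_(t < T) a ord0 t * b ord0 t.
Definition sqnorm (a : vec) : R := dotv a a.

Definition Theta : set R := `[0, 1]%classic.
Definition leb := @lebesgue_measure R.

Definition Mset (Mb : R) : set vec := [set X | forall t, 0 <= X ord0 t <= Mb + 1].

Definition nbhs_of_set (S Dom : set vec) : Prop :=
  exists U : set vec, [/\ open U, S `<=` U & U `<=` Dom].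

Definition borel_sets (U : topologicalType) : set (set U) := <<s open >>.

Definition L2 (x : R -> vec) : Prop := forall t : 'I_T,
  measurable_fun Theta (fun th => x th ord0 t) /\
  leb.-integrable Theta (fun th => ((x th ord0 t) ^+ 2)%:E).

Definition L2_in (S : set vec) (x : R -> vec) : Prop :=
  L2 x /\ {ae leb, forall th, Theta th -> S (x th)}.

Definition agg (x : R -> vec) : vec :=
  \row_(t < T) Rintegral leb Theta (fun th => x th ord0 t).

Definition profiles (Xs : R -> set vec) : set (R -> vec) :=
  [set x | L2 x /\ {ae leb, forall th, Theta th -> Xs th (x th)}].

Definition aggregates (Xs : R -> set vec) : set vec := agg @` profiles Xs.

Definition graphX (Xs : R -> set vec) : set (R * vec) :=
  [set p | Theta p.1 /\ Xs p.1 p.2].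

Definition convex_vset (S : set vec) : Prop :=
  forall x y (l : R), S x -> S y -> 0 <= l <= 1 -> S (l *: x + (1 - l) *: y).

(* convexity of F on S (segment clause makes sense for non-convex S too) *)
Definition convex_on (S : set vec) (F : vec -> R) : Prop :=
  forall x y (l : R), S x -> S y -> 0 <= l <= 1 -> S (l *: x + (1 - l) *: y) ->
    F (l *: x + (1 - l) *: y) <= l * F x + (1 - l) * F y.

Definition concave_on (S : set vec) (F : vec -> R) : Prop :=
  forall x y (l : R), S x -> S y -> 0 <= l <= 1 ->
    l * F x + (1 - l) * F y <= F (l *: x + (1 - l) *: y).

Definition strictly_concave_on (S : set vec) (F : vec -> R) : Prop :=
  forall x y (l : R), S x -> S y -> x <> y -> 0 < l < 1 ->
    l * F x + (1 - l) * F y < F (l *: x + (1 - l) *: y).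

(* strongly concave with modulus a :  F + (a/2) |.|^2 is concave *)
Definition strongly_concave_on (S : set vec) (a : R) (F : vec -> R) : Prop :=
  forall x y (l : R), S x -> S y -> 0 <= l <= 1 ->
    l * F x + (1 - l) * F y + a / 2 * (l * (1 - l)) * sqnorm (x - y)
      <= F (l *: x + (1 - l) *: y).

Definition monotone_map_on (S : set vec) (c : vec -> vec) : Prop :=
  forall X Y, S X -> S Y -> 0 <= dotv (c X - c Y) (X - Y).
Definition strictly_monotone_map_on (S : set vec) (c : vec -> vec) : Prop :=
  forall X Y, S X -> S Y -> X <> Y -> 0 < dotv (c X - c Y) (X - Y).
Definition strongly_monotone_map_on (S : set vec) (b : R) (c : vec -> vec) : Prop :=
  forall X Y, S X -> S Y -> b * sqnorm (X - Y) <= dotv (c X - c Y) (X - Y).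

(* a cost f : theta -> x_theta -> X -> R, defined on Dom^2 (Dom = calM') *)
Definition subdiff (Dom : set vec) (f : R -> vec -> vec -> R) (th : R)
    (x Y : vec) : set vec :=
  [set g | forall z, Dom z -> f th x Y + dotv g (z - x) <= f th z Y].

Definition Hmap (Dom : set vec) (f : R -> vec -> vec -> R) (x : R -> vec) :
    set (R -> vec) :=
  [set g | L2 g /\
     {ae leb, forall th, Theta th -> subdiff Dom f th (x th) (agg x) (g th)}].

Definition Iint (x y g h : R -> vec) : R :=
  Rintegral leb Theta (fun th => dotv (g th - h th) (x th - y th)).

Definition monotone_game (Mb : R) Dom f : Prop :=
  forall x y g h, L2_in (Mset Mb) x -> L2_in (Mset Mb) y ->
    Hmap Dom f x g -> Hmap Dom f y h -> 0 <= Iint x y g h.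

Definition strictly_monotone_game (Mb : R) Dom f : Prop :=
  monotone_game Mb Dom f /\
  forall x y g h, L2_in (Mset Mb) x -> L2_in (Mset Mb) y ->
    Hmap Dom f x g -> Hmap Dom f y h -> Iint x y g h = 0 ->
    {ae leb, forall th, Theta th -> x th = y th}.

Definition agg_strictly_monotone_game (Mb : R) Dom f : Prop :=
  monotone_game Mb Dom f /\
  forall x y g h, L2_in (Mset Mb) x -> L2_in (Mset Mb) y ->
    Hmap Dom f x g -> Hmap Dom f y h -> Iint x y g h = 0 -> agg x = agg y.

Definition strongly_monotone_game (Mb : R) Dom f (a : R) : Prop :=
  forall x y g h, L2_in (Mset Mb) x -> L2_in (Mset Mb) y ->
    Hmap Dom f x g -> Hmap Dom f y h ->
    a * Rintegral leb Theta (fun th => sqnorm (x th - y th)) <= Iint x y g h.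

Definition agg_strongly_monotone_game (Mb : R) Dom f (b : R) : Prop :=
  forall x y g h, L2_in (Mset Mb) x -> L2_in (Mset Mb) y ->
    Hmap Dom f x g -> Hmap Dom f y h ->
    b * sqnorm (agg x - agg y) <= Iint x y g h.

Definition AssumN1 (Mb : R) (Xs : R -> set vec) : Prop :=
  (forall th, Theta th ->
     [/\ Xs th !=set0, convex_vset (Xs th), compact (Xs th)
       & forall x, Xs th x -> sqnorm x <= Mb ^+ 2]) /\
  borel_sets (graphX Xs).

Definition AssumN2 (Mb : R) (Dom : set vec) (Xs : R -> set vec)
    (f : R -> vec -> vec -> R) : Prop :=
  [/\ exists K : R, forall th x Y, Theta th -> Mset Mb x -> Mset Mb Y ->
          `|f th x Y| <= K,
      forall Y, Mset Mb Y -> forall B : set R, borel_sets B ->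
          borel_sets (graphX Xs `&` (fun p => f p.1 p.2 Y) @^-1` B),
      forall th Y, Theta th -> Mset Mb Y ->
          {within Dom, continuous (fun x => f th x Y)} /\
          convex_on Dom (fun x => f th x Y)
    & exists Bf : R, forall th x Y g, Theta th -> Mset Mb x -> Mset Mb Y ->
          subdiff Dom f th x Y g -> sqnorm g <= Bf ^+ 2].

Definition argmin_on (S : set vec) (F : vec -> R) : set vec :=
  [set x | S x /\ forall z, S z -> F x <= F z].

Definition Br (Xs : R -> set vec) (f : R -> vec -> vec -> R) (Y : vec) :
    set (R -> vec) :=
  [set x | profiles Xs x /\
     forall th, Theta th -> argmin_on (Xs th) (fun z => f th z Y) (x th)].

Definition Dcorr (Dom : set vec) (Xs : R -> set vec) (f : R -> vec -> vec -> R)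
    (x : R -> vec) (Y : vec) (th : R) : set vec :=
  [set g | subdiff Dom f th (x th) Y g /\
     forall z, Xs th z -> 0 <= dotv g (z - x th)].

Definition measurable_corr (F : R -> set vec) : Prop :=
  forall U : set vec, open U ->
    measurable [set th | Theta th /\ (F th `&` U !=set0)].

Definition AssumN3 (Dom : set vec) (Xs : R -> set vec)
    (f : R -> vec -> vec -> R) : Prop :=
  forall Y, aggregates Xs Y -> forall x, Br Xs f Y x ->
    measurable_corr (Dcorr Dom Xs f x Y).

Definition lin_cost (c : vec -> vec) (u : R -> vec -> R) : R -> vec -> vec -> R :=
  fun th x X => dotv x (c X) - u th x.

End NonatomicGame.

(* Main.v *)
Require Import Defs.
From HB Require Import structures.
From mathcomp Require Import all_boot all_order all_algebra.
From mathcomp Require Import all_classical all_reals all_analysis.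
Import Order.TTheory GRing.Theory Num.Theory numFieldNormedType.Exports.
Local Open Scope classical_set_scope.
Local Open Scope ring_scope.
From mathcomp Require Import ring lra.
Import measurable_realfun.
Set Implicit Arguments. Unset Strict Implicit. Unset Printing Implicit Defensive.

Section Meas.
Context {R : realType}.
Implicit Types f g : R -> R.

Local Notation LR := (measurableTypeR R).
Lemma mTheta : measurable (Theta : set LR).
Proof. exact: measurable_itv. Qed.

Lemma lebTheta : leb (Theta : set R) = 1%E.
Proof. by rewrite /leb /Theta lebesgue_measure_itv /= lte_fin ltr01 sube0. Qed.

Lemma normM_le (a b : R) : `|a * b| <= `|a ^+ 2 + b ^+ 2|.
Proof.
rewrite (ger0_norm (_ : 0 <= a ^+ 2 + b ^+ 2)); last by rewrite addr_ge0 // sqr_ge0.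
have h1 := sqr_ge0 (a + b); have h2 := sqr_ge0 (a - b).
rewrite ler_norml; apply/andP; split; nra.
Qed.

Lemma sqB_le (a b : R) : `|(a - b) ^+ 2| <= `|2 * a ^+ 2 + 2 * b ^+ 2|.
Proof.
rewrite ger0_norm ?sqr_ge0 // ger0_norm; last by rewrite addr_ge0 // mulr_ge0 // sqr_ge0.
have h1 := sqr_ge0 (a + b); nra.
Qed.

Definition L2f f := measurable_fun (Theta : set LR) f /\
  leb.-integrable Theta (fun th => ((f th) ^+ 2)%:E).

Lemma int_cst (k : R) : leb.-integrable (Theta : set LR) (EFin \o cst k).
Proof.
apply/integrableP; split; first exact/measurable_EFinP/measurable_cst.
rewrite (_ : (fun x => _) = (fun x => cst `|k|%:E x)); last first.
  by apply: funext => x /=.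
rewrite integral_cst; last exact: mTheta.
by have := lebTheta; rewrite /leb => /= ->; rewrite mule1 ltry.
Qed.

Lemma L2f_cst (k : R) : L2f (cst k).
Proof.
split; first exact: measurable_cst.
exact: (int_cst (k ^+ 2)).
Qed.

Lemma L2f_mul f g : L2f f -> L2f g -> leb.-integrable Theta (EFin \o (f \* g)).
Proof.
move=> [mf If] [mg Ig].
apply: (le_integrable mTheta); last exact: (integrableD mTheta If Ig).
  exact/measurable_EFinP/measurable_funM.
move=> x _; rewrite !abse_EFin lee_fin /=.
exact: normM_le.
Qed.

Lemma L2f_int f : L2f f -> leb.-integrable Theta (EFin \o f).
Proof.
move=> Lf; have := L2f_mul Lf (L2f_cst 1).
apply: (eq_integrable mTheta) => x _ /=; by rewrite mulr1.
Qed.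

Lemma L2f_B f g : L2f f -> L2f g -> L2f (f \- g).
Proof.
move=> [mf If] [mg Ig]; split; first exact: measurable_funB.
have I2 := integrableD mTheta (integrableZl mTheta 2 If) (integrableZl mTheta 2 Ig).
apply: (le_integrable mTheta); last exact: I2.
  apply/measurable_EFinP; apply: (measurable_funM (f := f \- g) (g := f \- g));
  exact: measurable_funB.
move=> x _ /=; rewrite lee_fin; exact: sqB_le.
Qed.


Lemma aeF : Filter (almost_everywhere (leb : set LR -> \bar R)).
Proof. exact: (ae_filter_ringOfSetsType (@lebesgue_measure R)). Qed.

Lemma aeS (P Q : R -> Prop) : (forall x, P x -> Q x) ->
  {ae leb, forall x, P x} -> {ae leb, forall x, Q x}.
Proof. move=> PQ; exact: (@filterS _ _ aeF P Q PQ). Qed.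

Lemma aeS2 (P Q S : R -> Prop) : (forall x, P x -> Q x -> S x) ->
  {ae leb, forall x, P x} -> {ae leb, forall x, Q x} -> {ae leb, forall x, S x}.
Proof. move=> PQ; exact: (@filterS2 _ _ aeF P Q S PQ). Qed.

Lemma int_ae_abs f : measurable_fun (Theta : set LR) f ->
  {ae leb, forall th, Theta th -> 0 <= f th} ->
  (\int[leb]_(x in Theta) (f x)%:E = \int[leb]_(x in Theta) `|(f x)%:E|)%E.
Proof.
move=> mf H; have := (@ae_eq_integral _ _ _ leb Theta (fun x => `|(f x)%:E|%E) (EFin \o f) mTheta). apply.
- exact/measurable_EFinP.
- apply: (@measurableT_comp _ _ _ _ _ _ abse _ (EFin \o f)); [exact: abse_measurable | exact/measurable_EFinP].
- apply: aeS H => th Hth Tth /=; rewrite ger0_norm //; exact: Hth.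
Qed.

Lemma Rint_ae_ge0 f : measurable_fun (Theta : set LR) f ->
  {ae leb, forall th, Theta th -> 0 <= f th} -> 0 <= Rintegral leb Theta f.
Proof.
move=> mf H; rewrite /Rintegral int_ae_abs //; apply: fine_ge0.
by apply: integral_ge0 => x _; exact: abse_ge0.
Qed.

Lemma Rint_ae_eq0 f : leb.-integrable Theta (EFin \o f) ->
  {ae leb, forall th, Theta th -> 0 <= f th} -> Rintegral leb Theta f = 0 ->
  {ae leb, forall th, Theta th -> f th = 0}.
Proof.
move=> If H I0.
have mf : measurable_fun (Theta : set LR) f by apply/measurable_EFinP; exact: (measurable_int _ If).
have : (\int[leb]_(x in Theta) `|(f x)%:E| = 0)%E.
  rewrite -int_ae_abs // -(fineK (integrable_fin_num mTheta If)).
  by rewrite -/(Rintegral _ _ _) I0.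
move/(ae_eq_integral_abs _ mTheta (proj2 (measurable_EFinP _ _) mf)).
apply: aeS => th Hth Tth; have := Hth Tth; rewrite /cst /=.
by case.
Qed.

Lemma Rint_sum (I : Type) (s : seq I) (F : I -> R -> R) :
  (forall i, leb.-integrable Theta (EFin \o F i)) ->
  leb.-integrable Theta (EFin \o (fun x => \sum_(i <- s) F i x)) /\
  Rintegral leb Theta (fun x => \sum_(i <- s) F i x) =
    \sum_(i <- s) Rintegral leb Theta (F i).
Proof.
move=> IF; elim: s => [|i s [Is Es]].
  rewrite big_nil; under eq_fun do rewrite big_nil.
  split; first exact: (int_cst 0).
  by rewrite Rintegral_cst ?mul0r //; exact: mTheta.
rewrite big_cons; under eq_fun do rewrite big_cons.
split.
  exact: (integrableD mTheta (IF i) Is).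
rewrite RintegralD; [by rewrite Es|exact: mTheta|exact: IF|exact: Is].
Qed.

End Meas.
Section Alg.
Context {R : realType} {T : nat}.
Local Notation vec := 'rV[R]_T.
Implicit Types a b v w : vec.

Lemma dotvC a b : dotv a b = dotv b a.
Proof. by rewrite /dotv; apply: eq_bigr => i _; rewrite mulrC. Qed.

Lemma dotvDl a b v : dotv (a + b) v = dotv a v + dotv b v.
Proof. by rewrite /dotv -big_split; apply: eq_bigr => i _; rewrite mxE mulrDl. Qed.

Lemma dotvNl a v : dotv (- a) v = - dotv a v.
Proof. by rewrite /dotv -sumrN; apply: eq_bigr => i _; rewrite mxE mulNr. Qed.

Lemma dotvBl a b v : dotv (a - b) v = dotv a v - dotv b v.
Proof. by rewrite dotvDl dotvNl. Qed.

Lemma dotvZl (k : R) a v : dotv (k *: a) v = k * dotv a v.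
Proof. by rewrite /dotv mulr_sumr; apply: eq_bigr => i _; rewrite mxE mulrA. Qed.

Lemma dotvBr a b v : dotv v (a - b) = dotv v a - dotv v b.
Proof. by rewrite dotvC dotvBl dotvC [dotv b v]dotvC. Qed.

Lemma dotvZr (k : R) a v : dotv v (k *: a) = k * dotv v a.
Proof. by rewrite dotvC dotvZl dotvC. Qed.

Lemma sqnorm_ge0 a : 0 <= sqnorm a.
Proof. by rewrite /sqnorm /dotv; apply: sumr_ge0 => i _; rewrite -expr2 sqr_ge0. Qed.

Lemma sqnormBC a b : sqnorm (a - b) = sqnorm (b - a).
Proof. by rewrite /sqnorm -opprB dotvNl dotvC dotvNl opprK. Qed.

Lemma Mset_conv (Mb : R) a b (l : R) : Mset Mb a -> Mset Mb b -> 0 <= l <= 1 ->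
  Mset Mb (l *: a + (1 - l) *: b).
Proof.
move=> Ha Hb /andP[l0 l1] t; rewrite !mxE.
have /andP[a0 a1] := Ha t; have /andP[b0 b1] := Hb t.
apply/andP; split; nra.
Qed.

Variables (Mb : R) (Dom : set vec) (c : vec -> vec) (u : R -> vec -> R).
Hypothesis MD : Mset Mb `<=` Dom.

Lemma supgrad th a X g z : subdiff Dom (lin_cost c u) th a X g -> Mset Mb z ->
  u th z - u th a <= dotv (c X - g) (z - a).
Proof.
move=> H Mz; have := H z (MD Mz); rewrite /lin_cost.
rewrite dotvBl (dotvC (c X)) dotvBl; lra.
Qed.

Definition Dfun a b X Y g h :=
  dotv (g - h) (a - b) - dotv (c X - c Y) (a - b).

Lemma Dfun_E a b X Y g h :
  Dfun a b X Y g h = dotv (c X - g) (b - a) + dotv (c Y - h) (a - b).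
Proof.
rewrite /Dfun !dotvBl !dotvBr; lra.
Qed.

Lemma D_ge0 th a b X Y g h : Mset Mb a -> Mset Mb b ->
  subdiff Dom (lin_cost c u) th a X g -> subdiff Dom (lin_cost c u) th b Y h ->
  0 <= Dfun a b X Y g h.
Proof.
move=> Ma Mb' Hg Hh; rewrite Dfun_E.
have := supgrad Hg Mb'; have := supgrad Hh Ma; lra.
Qed.

Lemma D_gt0 th a b X Y g h : Mset Mb a -> Mset Mb b -> a <> b ->
  strictly_concave_on (Mset Mb) (u th) ->
  subdiff Dom (lin_cost c u) th a X g -> subdiff Dom (lin_cost c u) th b Y h ->
  0 < Dfun a b X Y g h.
Proof.
move=> Ma Mb' ab SC Hg Hh; rewrite Dfun_E.
pose m := (1/2 : R) *: a + (1 - 1/2) *: b.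
have Mm : Mset Mb m by apply: Mset_conv => //; apply/andP; split; lra.
have H1 := supgrad Hg Mm; have H2 := supgrad Hh Mm.
have E1 : m - a = (1/2 : R) *: (b - a) by apply/rowP => i; rewrite ?/m ?/z !mxE; lra.
have E2 : m - b = (1/2 : R) *: (a - b) by apply/rowP => i; rewrite ?/m ?/z !mxE; lra.
rewrite E1 dotvZr in H1; rewrite E2 dotvZr in H2.
have hl : 0 < (1/2 : R) < 1 by apply/andP; split; lra.
have H3 := SC a b (1/2) Ma Mb' ab hl; rewrite -/m in H3; lra.
Qed.

Lemma tangent_strong th a b X g (al : R) : Mset Mb a -> Mset Mb b ->
  strongly_concave_on (Mset Mb) al (u th) ->
  subdiff Dom (lin_cost c u) th a X g ->
  forall l : R, 0 < l < 1 ->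
  u th b - u th a + al / 2 * (1 - l) * sqnorm (b - a) <= dotv (c X - g) (b - a).
Proof.
move=> Ma Mb' SC Hg l /andP[l0 l1].
pose z := l *: b + (1 - l) *: a.
have Mz : Mset Mb z by apply: Mset_conv => //; apply/andP; split; lra.
have H1 := supgrad Hg Mz.
have E1 : z - a = l *: (b - a) by apply/rowP => i; rewrite ?/m ?/z !mxE; ring.
rewrite E1 dotvZr in H1.
have hl : 0 <= l <= 1 by apply/andP; split; lra.
have H2 := SC b a l Mb' Ma hl; rewrite -/z in H2.
set P := dotv _ _ in H1 *; set S := sqnorm _ in H2 *.
have : l * (u th b - u th a + al / 2 * (1 - l) * S - P) <= 0 by nra.
rewrite pmulr_rle0 //; lra.
Qed.


Lemma D_strong th a b X Y g h (al : R) : Mset Mb a -> Mset Mb b ->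
  strongly_concave_on (Mset Mb) al (u th) ->
  subdiff Dom (lin_cost c u) th a X g -> subdiff Dom (lin_cost c u) th b Y h ->
  al * sqnorm (a - b) <= Dfun a b X Y g h.
Proof.
move=> Ma Mb' SC Hg Hh.
have D0 := D_ge0 Ma Mb' Hg Hh.
set A := al * sqnorm (a - b); set D := Dfun _ _ _ _ _ _ in D0 *.
have Hl : forall l : R, 0 < l < 1 -> (1 - l) * A <= D.
  move=> l hl; have := tangent_strong Ma Mb' SC Hg hl.
  have := tangent_strong Mb' Ma SC Hh hl.
  rewrite /D Dfun_E /A (sqnormBC b a); lra.
rewrite leNgt; apply/negP => DA.
have A0 : 0 < A by apply: le_lt_trans DA.
pose l := (A - D) / (2 * A).
have lA : l * A = (A - D) / 2 by rewrite /l; field; rewrite gt_eqF.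
have l0 : 0 < l by rewrite /l divr_gt0 // ?subr_gt0 // mulr_gt0.
have l1 : l < 1.
  rewrite /l ltr_pdivrMr; last lra.
  move: A0 D0; clear; move: A D => A D A0 D0; lra.
have := Hl l; rewrite l0 l1 => /(_ isT).
rewrite mulrBl mul1r lA; lra.
Qed.

End Alg.
Section Main.
Context {R : realType} {T : nat}.
Local Notation vec := 'rV[R]_T.
Local Notation LR := (measurableTypeR R).
Variables (Mb : R) (Dom : set vec) (c : vec -> vec) (u : R -> vec -> R).
Hypothesis MD : Mset Mb `<=` Dom.

Lemma L2_comp (x : R -> vec) : L2 x -> forall t, L2f (fun th => x th ord0 t).
Proof. by move=> Lx t; case: (Lx t) => mx Ix; split. Qed.

Lemma L2f_Bv (p q : R -> vec) : (forall t, L2f (fun th => p th ord0 t)) ->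
  (forall t, L2f (fun th => q th ord0 t)) ->
  forall t, L2f (fun th => (p th - q th) ord0 t).
Proof.
move=> Lp Lq t.
have -> : (fun th => (p th - q th) ord0 t) = (fun th => p th ord0 t) \- (fun th => q th ord0 t).
  by apply: funext => th; rewrite !mxE.
exact: L2f_B.
Qed.

Lemma dot_L2 (p q : R -> vec) : (forall t, L2f (fun th => p th ord0 t)) ->
  (forall t, L2f (fun th => q th ord0 t)) ->
  leb.-integrable Theta (EFin \o (fun th => dotv (p th) (q th))) /\
  Rintegral leb Theta (fun th => dotv (p th) (q th)) =
    \sum_(t < T) Rintegral leb Theta (fun th => p th ord0 t * q th ord0 t).
Proof.
move=> Lp Lq.
have := @Rint_sum R _ (index_enum 'I_T) (fun t th => p th ord0 t * q th ord0 t).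
by apply => t; exact: (L2f_mul (Lp t) (Lq t)).
Qed.

Lemma agg_M (x : R -> vec) : L2_in (Mset Mb) x -> Mset Mb (agg x).
Proof.
move=> [Lx Mx] t; rewrite mxE.
have [mx Ix] := L2_comp Lx t.
apply/andP; split.
  apply: Rint_ae_ge0 => //; apply: aeS Mx => th H Tth.
  by have /andP[] := H Tth t.
have Ic := @int_cst R (Mb + 1).
have Ixt := L2f_int (L2_comp Lx t).
have : 0 <= Rintegral leb Theta (fun th => (Mb + 1) - x th ord0 t).
  apply: Rint_ae_ge0.
    exact: (measurable_funB (measurable_cst (Mb + 1)) mx).
  apply: aeS Mx => th H Tth.
  by have /andP[_ ] := H Tth t; rewrite subr_ge0.
rewrite RintegralB //; last exact: mTheta.
rewrite Rintegral_cst; last exact: mTheta.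
by have := @lebTheta R; rewrite /leb => /= ->; rewrite /= mulr1 subr_ge0.
Qed.

Definition Dth (x y g h : R -> vec) th :=
  Dfun c (x th) (y th) (agg x) (agg y) (g th) (h th).

Lemma decomp (x y g h : R -> vec) : L2_in (Mset Mb) x -> L2_in (Mset Mb) y ->
  Hmap Dom (lin_cost c u) x g -> Hmap Dom (lin_cost c u) y h ->
  leb.-integrable Theta (EFin \o Dth x y g h) /\
  Iint x y g h = Rintegral leb Theta (Dth x y g h) +
                 dotv (c (agg x) - c (agg y)) (agg x - agg y).
Proof.
move=> [Lx _] [Ly _] [Lg _] [Lh _].
have Lxy := L2f_Bv (L2_comp Lx) (L2_comp Ly).
have Lgh := L2f_Bv (L2_comp Lg) (L2_comp Lh).
have [IF EF] := dot_L2 Lgh Lxy.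
set k := c (agg x) - c (agg y).
have Lk : forall t, L2f (fun _ : R => k ord0 t) by move=> t; exact: (L2f_cst (k ord0 t)).
have [IL EL] := @dot_L2 (fun _ => k) _ Lk Lxy.
have ID : leb.-integrable Theta (EFin \o Dth x y g h).
  exact: (integrableB mTheta IF IL).
split => //.
rewrite /Iint /Dth /Dfun RintegralB //; last exact: mTheta.
rewrite -/k EL (_ : \sum_(t < T) _ = dotv k (agg x - agg y)); first by rewrite subrK.
rewrite /dotv; apply: eq_bigr => t _.
rewrite !mxE.
have Ixt := L2f_int (L2_comp Lx t); have Iyt := L2f_int (L2_comp Ly t).
rewrite -RintegralB //; last exact: mTheta.
rewrite -RintegralZl; last 2 first.
- exact: mTheta.
- exact: (integrableB mTheta Ixt Iyt).
by apply: eq_Rintegral => th _; rewrite !mxE.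
Qed.

Lemma good (x y g h : R -> vec) : L2_in (Mset Mb) x -> L2_in (Mset Mb) y ->
  Hmap Dom (lin_cost c u) x g -> Hmap Dom (lin_cost c u) y h ->
  {ae leb, forall th, Theta th -> [/\ Mset Mb (x th), Mset Mb (y th),
     subdiff Dom (lin_cost c u) th (x th) (agg x) (g th) &
     subdiff Dom (lin_cost c u) th (y th) (agg y) (h th)]}.
Proof.
move=> [_ Mx] [_ My] [_ Hg] [_ Hh].
have A1 := aeS2 (fun th (H1 : Theta th -> Mset Mb (x th)) (H2 : Theta th -> Mset Mb (y th)) Tth => conj (H1 Tth) (H2 Tth)) Mx My.
have A2 := aeS2 (fun th (H1 : Theta th -> subdiff Dom (lin_cost c u) th (x th) (agg x) (g th)) (H2 : Theta th -> subdiff Dom (lin_cost c u) th (y th) (agg y) (h th)) Tth => conj (H1 Tth) (H2 Tth)) Hg Hh.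
apply: aeS2 A1 A2 => th H1 H2 Tth.
by case: (H1 Tth) => ? ?; case: (H2 Tth) => ? ?; split.
Qed.

End Main.

Lemma intZ {R : realType} (k : R) (f : R -> R) :
  leb.-integrable Theta (EFin \o f) ->
  leb.-integrable Theta (EFin \o (fun x => k * f x)).
Proof.
move=> If; apply: (eq_integrable mTheta _ _ _ (integrableZl mTheta k If)).
by move=> x _ /=.
Qed.

Unset Implicit Arguments. Set Strict Implicit. Set Printing Implicit Defensive.

Theorem mainTheorem6 (R : realType) (T : nat) (hT : (0 < T)%N) (Mb : R)
  (hM : 0 < Mb) (Dom : set 'rV[R]_T) (Xs : R -> set 'rV[R]_T)
  (c : 'rV[R]_T -> 'rV[R]_T) (u : R -> 'rV[R]_T -> R) :
  nbhs_of_set (Mset Mb) Dom ->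
  AssumN1 Mb Xs ->
  AssumN2 Mb Dom Xs (lin_cost c u) ->
  AssumN3 Dom Xs (lin_cost c u) ->
  monotone_map_on (Mset Mb) c ->
  (forall th, Theta th -> concave_on (Mset Mb) (u th)) ->
  [/\ monotone_game Mb Dom (lin_cost c u),
      (forall th, Theta th -> strictly_concave_on (Mset Mb) (u th)) ->
        strictly_monotone_game Mb Dom (lin_cost c u),
      strictly_monotone_map_on (Mset Mb) c ->
        agg_strictly_monotone_game Mb Dom (lin_cost c u),
      forall (alpha_ : R -> R) (alpha : R),
        (forall th, Theta th -> strongly_concave_on (Mset Mb) (alpha_ th) (u th)) ->
        inf [set alpha_ th | th in Theta] = alpha -> 0 < alpha ->
        strongly_monotone_game Mb Dom (lin_cost c u) alpha
    & forall beta : R, strongly_monotone_map_on (Mset Mb) beta c ->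
        agg_strongly_monotone_game Mb Dom (lin_cost c u) beta].
Proof.
move=> [U [oU MU UD]] _ _ _ cmon _.
have MD : Mset Mb `<=` Dom by move=> z hz; apply: UD; apply: MU.
have base : forall x y g h, L2_in (Mset Mb) x -> L2_in (Mset Mb) y ->
    Hmap Dom (lin_cost c u) x g -> Hmap Dom (lin_cost c u) y h ->
  [/\ leb.-integrable Theta (EFin \o Dth c x y g h),
      {ae leb, forall th, Theta th -> 0 <= Dth c x y g h th},
      0 <= Rintegral leb Theta (Dth c x y g h),
      0 <= dotv (c (agg x) - c (agg y)) (agg x - agg y) &
      Iint x y g h = Rintegral leb Theta (Dth c x y g h) +
                     dotv (c (agg x) - c (agg y)) (agg x - agg y)].
  move=> x y g h Lx Ly Hg Hh.
  have [ID E] := decomp (u:=u) Lx Ly Hg Hh.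
  have G := good Lx Ly Hg Hh.
  have D0 : {ae leb, forall th, Theta th -> 0 <= Dth c x y g h th}.
    apply: aeS G => th H Tth; case: (H Tth) => Ma Mb' Hg' Hh'.
    exact: (D_ge0 MD Ma Mb' Hg' Hh').
  split => //.
    apply: Rint_ae_ge0 => //.
    apply/measurable_EFinP; exact: (measurable_int _ ID).
  by apply: cmon; apply: agg_M.
have mono : monotone_game Mb Dom (lin_cost c u).
  move=> x y g h Lx Ly Hg Hh; have [_ _ R0 c0 ->] := base x y g h Lx Ly Hg Hh.
  exact: addr_ge0.
split => //.
- move=> SC; split => // x y g h Lx Ly Hg Hh I0.
  have [ID D0 R0 c0 E] := base x y g h Lx Ly Hg Hh.
  have RD0 : Rintegral leb Theta (Dth c x y g h) = 0 by lra.
  have Z := Rint_ae_eq0 ID D0 RD0.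
  have G := good Lx Ly Hg Hh.
  apply: aeS2 G Z => th H1 H2 Tth.
  case: (H1 Tth) => Ma Mb' Hg' Hh'; have := H2 Tth.
  case: (boolP (x th == y th)) => [/eqP //|neq].
  have neq' : x th <> y th by move=> E'; move: neq; rewrite E' eqxx.
  have := D_gt0 MD Ma Mb' neq' (SC th Tth) Hg' Hh'.
  rewrite /Dth => Hpos Hz; by rewrite Hz ltxx in Hpos.
- move=> SM; split => // x y g h Lx Ly Hg Hh I0.
  have [ID D0 R0 c0 E] := base x y g h Lx Ly Hg Hh.
  case: (boolP (agg x == agg y)) => [/eqP //|ne].
  have ne' : agg x <> agg y by move=> E'; move: ne; rewrite E' eqxx.
  exfalso; have := SM _ _ (agg_M Lx) (agg_M Ly) ne'; lra.
- move=> al a SC inf_eq a0 x y g h Lx Ly Hg Hh.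
  have hlb : has_lbound [set al th | th in Theta].
    apply: contrapT => nlb.
    have := @inf_out R [set al th | th in Theta].
    rewrite inf_eq => H.
    have : a = 0 by apply: H => -[_ ].
    lra.
  have ale : forall th, Theta th -> a <= al th.
    move=> th Tth; rewrite -inf_eq; have L := ge_inf hlb; apply: L; by exists th.
  have [ID D0 R0 c0 E] := base x y g h Lx Ly Hg Hh.
  have [Lx' _] := Lx; have [Ly' _] := Ly.
  have Lxy := L2f_Bv (L2_comp Lx') (L2_comp Ly').
  have [IS _] := dot_L2 Lxy Lxy.
  have IaS := intZ a IS.
  have key : {ae leb, forall th, Theta th ->
      0 <= Dth c x y g h th - a * sqnorm (x th - y th)}.
    apply: aeS (good Lx Ly Hg Hh) => th H Tth.
    case: (H Tth) => Ma Mb' Hg' Hh'.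
    have := D_strong MD Ma Mb' (SC th Tth) Hg' Hh'.
    have := ler_wpM2r (sqnorm_ge0 (x th - y th)) (ale th Tth).
    rewrite /Dth subr_ge0; exact: le_trans.
  have mDS : measurable_fun (Theta : set (measurableTypeR R))
      (fun th => Dth c x y g h th - a * sqnorm (x th - y th)).
    apply/measurable_EFinP; exact: (measurable_int _ (integrableB mTheta ID IaS)).
  have := Rint_ae_ge0 mDS key.
  rewrite RintegralB; last 3 first.
  + exact: mTheta.
  + exact: ID.
  + exact: IaS.
  rewrite RintegralZl; last 2 first.
  + exact: mTheta.
  + exact: IS.
  move=> HH.
  have : a * Rintegral leb Theta (fun th => sqnorm (x th - y th)) <=
         Rintegral leb Theta (Dth c x y g h) by lra.
  rewrite E; lra.
- move=> b SM x y g h Lx Ly Hg Hh.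
  have [ID D0 R0 c0 E] := base x y g h Lx Ly Hg Hh.
  have := SM _ _ (agg_M Lx) (agg_M Ly); rewrite E; lra.
Qed.
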